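(* Let $\mathbb W$, $\mathbb W_i$ and $C$ be as in the context. An automorphism $\theta\in\operatorname{Aut}(\mathbb W)$ lies in $C$ if and only if $\theta(\mathbb W_i)=\mathbb W_i$ for every $2\le i\le n$.
   Context: Fix an integer $n\ge 3$, pairwise distinct odd integers $m_1,\dots,m_l\ge 3$ and positive integers $k_1,\dots,k_l$ with $k_1+\cdots+k_l=n-1$. Partition $\{2,\dots,n\}$ into consecutive blocks $A_1=\{2,\dots,k_1+1\}$, $A_2=\{k_1+2,\dots,k_1+k_2+1\}$, …, $A_l$ (of sizes $k_1,\dots,k_l$), and put $t_i=m_j$ for $i\in A_j$. The star group is $\mathbb W=\langle w_1,\dots,w_n\mid w_j^2=1\ (1\le j\le n),\ (w_1w_i)^{t_i}=1\ (2\le i\le n)\rangle$. For $2\le i\le n$ let $\mathbb W_i=\langle w_1,w_i\rangle$ (dihedral of order $2t_i$). For $2\le i\le n$ and $1\le k<t_i$ with $\gcd(k,t_i)=1$, $\theta_i^k$ is the automorphism of $\mathbb W$ with $\theta_i^k(w_j)=w_j$ for $j\ne i$ and $\theta_i^k(w_i)=w_1(w_1w_i)^k$. Let $C_i=\langle\theta_i^k : 1\le k<t_i,\ \gcd(k,t_i)=1\rangle\cong \operatorname{U}_{t_i}$ (the unit group of $\mathbb Z/t_i\mathbb Z$) and $C=C_2\times C_3\times\cdots\times C_n\le\operatorname{Aut}(\mathbb W)$, an abelian subgroup isomorphic to $\prod_{j=1}^l(\operatorname{U}_{m_j})^{k_j}$. *)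

(* Defs.v *)
(* The star Coxeter group W is modelled concretely
   by its presentation: elements are words over the generators, and equality
   in W is the congruence [eqW] generated by the defining relations.
   Letter a : 'I_n stands for the generator w_(a+1); so w_1 is the letter
   with value 0 and w_i (2 <= i <= n) is the letter with value i-1. *)
From mathcomp Require Import all_boot.
Set Implicit Arguments. Unset Strict Implicit. Unset Printing Implicit Defensive.

Section Star.
Variable n : nat.
Notation word := (seq 'I_n).

(* (t_2, ..., t_n) : block j consists of k_j copies of m_j *)
Definition tseq (ms ks : seq nat) : seq nat :=
  flatten [seq nseq p.2 p.1 | p <- zip ms ks].

(* t attached to the letter a (meaningful for val a >= 1, i.e. w_(a+1), a+1>=2) *)
Definition tlet (ts : seq nat) (a : 'I_n) : nat := nth 0 ts (val a).-1.

Inductive eqW (ts : seq nat) : word -> word -> Prop :=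
| eqW_refl s : eqW ts s s
| eqW_sym s u : eqW ts s u -> eqW ts u s
| eqW_trans s u v : eqW ts s u -> eqW ts u v -> eqW ts s v
| eqW_ctx x y s u : eqW ts s u -> eqW ts (x ++ s ++ y) (x ++ u ++ y)
| eqW_invol a : eqW ts [:: a; a] [::]
| eqW_braid b a : val b = 0 -> 0 < val a ->
    eqW ts (flatten (nseq (tlet ts a) [:: b; a])) [::].

Definition is_hom (ts : seq nat) (f : word -> word) : Prop :=
  (forall s u, eqW ts s u -> eqW ts (f s) (f u)) /\
  (forall s u, eqW ts (f (s ++ u)) (f s ++ f u)).

Definition is_aut (ts : seq nat) (f : word -> word) : Prop :=
  is_hom ts f /\
  exists g, is_hom ts g /\
    (forall s, eqW ts (g (f s)) s) /\ (forall s, eqW ts (f (g s)) s).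

(* the automorphism theta_i^k (a = letter of w_i, b = letter of w_1):
   w_i |-> w_1 (w_1 w_i)^k, other generators fixed *)
Definition theta (b a : 'I_n) (k : nat) (s : word) : word :=
  flatten [seq (if c == a then b :: flatten (nseq k [:: b; a]) else [:: c]) | c <- s].

(* C = subgroup of Aut(W) generated by all theta_i^k, 2<=i<=n, 1<=k<t_i,
   gcd(k,t_i)=1; automorphisms are identified up to eqW pointwise *)
Inductive inC (ts : seq nat) : (word -> word) -> Prop :=
| inC_id f : (forall s, eqW ts (f s) s) -> inC ts f
| inC_gen b a k f : val b = 0 -> 0 < val a -> 1 <= k < tlet ts a ->
    coprime k (tlet ts a) ->
    (forall s, eqW ts (f s) (theta b a k s)) -> inC ts f
| inC_comp f g h : inC ts f -> inC ts g ->
    (forall s, eqW ts (h s) (f (g s))) -> inC ts h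
| inC_inv f g : inC ts f -> is_hom ts g ->
    (forall s, eqW ts (g (f s)) s) -> inC ts g.

Definition inWi (ts : seq nat) (a : 'I_n) (s : word) : Prop :=
  exists u, all (fun c : 'I_n => (val c == 0) || (c == a)) u /\ eqW ts s u.

Definition stabilizes (ts : seq nat) (a : 'I_n) (f : word -> word) : Prop :=
  (forall s, inWi ts a s -> inWi ts a (f s)) /\
  (forall s, inWi ts a s -> exists u, inWi ts a u /\ eqW ts (f u) s).

End Star.

(* Main.v *)
Require Import Defs.
From mathcomp Require Import all_boot zify.
From mathcomp Require all_algebra ring.
Set Implicit Arguments. Unset Strict Implicit. Unset Printing Implicit Defensive.
Module MA.
Import all_algebra.
Import GRing.Theory.

Section Basics.
Variable n : nat.
Variable ts : seq nat.
Local Notation word := (seq 'I_n).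
Local Notation E := (eqW ts).

Lemma E_cat (s s' u u' : word) : E s s' -> E u u' -> E (s ++ u) (s' ++ u').
Proof.
move=> H1 H2; apply: eqW_trans (_ : E (s' ++ u) _).
  by have := eqW_ctx [::] u H1.
by have := eqW_ctx s' [::] H2; rewrite !cats0.
Qed.

Lemma E_cons c (s s' : word) : E s s' -> E (c :: s) (c :: s').
Proof. by move=> H; apply: (E_cat (s:=[::c]) (s' := [:: c])) => //; apply: eqW_refl. Qed.

Lemma E_rev (x : word) : E (rev x ++ x) [::].
Proof.
elim: x => [|c x IH] /=; first exact: eqW_refl.
rewrite rev_cons -cats1 -catA.
apply: eqW_trans IH.
have := eqW_ctx (rev x) x (eqW_invol ts c). by [].
Qed.

Lemma E_idem (x : word) : E x (x ++ x) -> E x [::].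
Proof.
move=> H. apply: eqW_trans (E_rev x).
apply: eqW_trans (_ : E (rev x ++ (x ++ x)) _).
  rewrite catA. apply: eqW_sym. 
  by have := E_cat (E_rev x) (eqW_refl ts x).
by apply: E_cat; [apply: eqW_refl| apply: eqW_sym].
Qed.

Lemma hom_nil (f : word -> word) : is_hom ts f -> E (f [::]) [::].
Proof. by case=> _ H; apply: E_idem; exact: (H [::] [::]). Qed.

Lemma hom_cons (f : word -> word) c (s : word) : is_hom ts f -> E (f (c :: s)) (f [:: c] ++ f s).
Proof. by case=> _ H; exact: (H [:: c] s). Qed.

Definition P (b a : 'I_n) j : word := flatten (nseq j [:: b; a]).

Lemma P_add b a x y : P b a (x + y) = P b a x ++ P b a y.
Proof. by rewrite /P nseqD flatten_cat. Qed.

Lemma P_S b a j : P b a j.+1 = [:: b, a & P b a j].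
Proof. by []. Qed.

Section BA.
Variables b a : 'I_n.
Hypothesis hb : val b = 0.
Hypothesis ha : 0 < val a.
Local Notation T := (tlet ts a).

Lemma P_T : E (P b a T) [::].
Proof. exact: eqW_braid. Qed.

Lemma P_mulT q : E (P b a (q * T)) [::].
Proof.
elim: q => [|q IH]; first exact: eqW_refl.
rewrite mulSn P_add. by have := E_cat P_T IH.
Qed.

Lemma P_mod j : E (P b a j) (P b a (j %% T)).
Proof.
rewrite {1}(divn_eq j T) P_add.
have := E_cat (P_mulT (j %/ T)) (eqW_refl ts (P b a (j %% T))). by [].
Qed.

Lemma P_dvd j : T %| j -> E (P b a j) [::].
Proof. by move=> /eqP Hj; apply: eqW_trans (P_mod j) _; rewrite Hj; apply: eqW_refl. Qed.

Hypothesis hT : 0 < tlet ts a.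

Lemma bb_E : E [:: b; b] [::].
Proof. exact: eqW_invol. Qed.

Lemma baab_E : E [:: b; a; a; b] [::].
Proof.
apply: eqW_trans bb_E.
by have := eqW_ctx [:: b] [:: b] (eqW_invol ts a).
Qed.

Lemma ab_E : E [:: a; b] (P b a T.-1).
Proof.
have HT : P b a T = P b a T.-1 ++ [:: b; a].
  by rewrite -{1}(prednK hT) -addn1 P_add /= .
apply: eqW_trans (_ : E (P b a T ++ [:: a; b]) _).
  by have := E_cat (eqW_sym P_T) (eqW_refl ts [:: a; b]).
rewrite HT -catA.
by have := E_cat (eqW_refl ts (P b a T.-1)) baab_E; rewrite cats0.
Qed.

Lemma letter_b c : val c = 0 -> c = b.
Proof. by move=> Hc; apply: val_inj; rewrite /= Hc hb. Qed.

Lemma nf (u : word) : all (fun c : 'I_n => (val c == 0) || (c == a)) u ->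
  (exists j, E u (P b a j)) \/ (exists j, E u (b :: P b a j)).
Proof.
elim: u => [|c u IH] /=; first by left; exists 0; apply: eqW_refl.
case/andP=> /orP[/eqP/letter_b ->| /eqP ->] /IH [[j Hj]|[j Hj]].
- by right; exists j; apply: E_cons.
- left; exists j; apply: eqW_trans (_ : E [:: b, b & P b a j] _).
    by apply: E_cons.
  by have := eqW_ctx [::] (P b a j) bb_E.
- right; exists j.+1; rewrite P_S.
  apply: eqW_trans (_ : E [:: a & P b a j] _); first by apply: E_cons.
  by have := eqW_ctx [::] [:: a & P b a j] (eqW_sym bb_E).
- left; exists (T.-1 + j); rewrite P_add.
  apply: eqW_trans (_ : E [:: a, b & P b a j] _); first by apply: E_cons.
  by have := E_cat ab_E (eqW_refl ts (P b a j)).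
Qed.

End BA.
End Basics.

End MA.
Import MA.
Module MB.
Import all_algebra ring.
Import GRing.Theory.
Local Open Scope ring_scope.

Section Rep.
Variable n : nat.
Variable ts : seq nat.
Local Notation word := (seq 'I_n).
Local Notation E := (eqW ts).
Variable T : nat.

Definition mulD (x y : bool * 'Z_T) : bool * 'Z_T :=
  (x.1 (+) y.1, (if y.1 then - x.2 else x.2) + y.2).

Lemma mulDA x y z : mulD (mulD x y) z = mulD x (mulD y z).
Proof.
case: x y z => [x1 x2] [[|] y2] [[|] z2]; rewrite /mulD /= ?addbA;
  congr pair; try ring; by case: x1.
Qed.

Lemma mul1D x : mulD (false, 0) x = x.
Proof. by case: x => [[|] x2]; rewrite /mulD /= ?oppr0 add0r. Qed.

Variable z : 'I_n -> 'Z_T.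

Definition ev (s : word) := foldr (fun c acc => mulD (true, z c) acc) (false, 0) s.

Lemma ev_cat s u : ev (s ++ u) = mulD (ev s) (ev u).
Proof. by elim: s => [|c s IH] /=; rewrite ?mul1D // IH mulDA. Qed.

Lemma ev_P b a j : ev (P b a j) = (false, j%:R * (z a - z b)).
Proof.
elim: j => [|j IH]; first by rewrite mul0r.
rewrite P_S /= IH /mulD /=; congr pair; rewrite mulrSr; ring.
Qed.

Hypothesis hz : forall b a : 'I_n, val b = 0%N -> (0 < val a)%N ->
  (tlet ts a)%:R * (z a - z b) = 0.

Lemma ev_E s u : E s u -> ev s = ev u.
Proof.
elim=> //.
- by move=> s1 u1 v1 _ -> _ ->.
- by move=> x y s1 u1 _ H; rewrite !ev_cat H.
- by move=> c; rewrite /= /mulD /= addr0 addNr.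
- by move=> b a hb ha; have := ev_P b a (tlet ts a); rewrite /P => ->; rewrite hz.
Qed.
End Rep.

End MB.
Import MB.
Module MC.
Import all_algebra ring.
Import GRing.Theory.
Local Open Scope ring_scope.

Lemma Zp_natE T j : (1 < T)%N -> ((j%:R : 'Z_T) == 0) = (T %| j)%N.
Proof.
move=> hT; apply/idP/idP.
  by move/eqP/(congr1 val); rewrite /= val_Zp_nat // => /eqP.
by move=> /eqP Hj; apply/eqP; apply: val_inj; rewrite /= val_Zp_nat.
Qed.

Lemma Zp_nat1 T j : (1 < T)%N -> (j%:R : 'Z_T) = 1 -> (j %% T = 1)%N.
Proof.
move=> hT /(congr1 val); rewrite /= val_Zp_nat //.
Qed.

Section Rep2.
Variable n : nat.
Variable ts : seq nat.
Local Notation word := (seq 'I_n).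
Local Notation E := (eqW ts).
Variables b0 a0 : 'I_n.
Hypothesis hb0 : val b0 = 0%N.
Hypothesis ha0 : (0 < val a0)%N.
Local Notation T := (tlet ts a0).
Hypothesis hT : (1 < T)%N.

Definition z0 (c : 'I_n) : 'Z_T := if c == a0 then 1 else 0.

Lemma hz0 : forall b a : 'I_n, val b = 0%N -> (0 < val a)%N ->
  (tlet ts a)%:R * (z0 a - z0 b) = 0.
Proof.
move=> b a hb ha; rewrite /z0.
have -> : (b == a0) = false.
  by apply/negbTE; apply/eqP => Hb; move: ha0; rewrite -Hb hb.
case: eqP => [->|_]; last by rewrite subrr mulr0.
by rewrite subr0 mulr1; apply/eqP; rewrite Zp_natE.
Qed.

Definition ev0 := ev z0.

Lemma ev0_E (s u : word) : E s u -> ev0 s = ev0 u.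
Proof. move=> H. exact: (@ev_E n ts T z0 hz0 s u H). Qed.

Lemma z0b : z0 b0 = 0.
Proof.
rewrite /z0; case: eqP => // Hb; by move: ha0; rewrite -Hb hb0.
Qed.

Lemma ev0_b : ev0 [:: b0] = (true, 0).
Proof. by rewrite /ev0 /= z0b /mulD /= addr0. Qed.

Lemma ev0_a : ev0 [:: a0] = (true, 1).
Proof. by rewrite /ev0 /= /z0 eqxx /mulD /= addr0. Qed.

Lemma ev0_nil : ev0 [::] = (false, 0).
Proof. by []. Qed.

Lemma ev0_P j : ev0 (P b0 a0 j) = (false, j%:R).
Proof. by rewrite /ev0 ev_P z0b subr0 /z0 eqxx mulr1. Qed.

Lemma ev0_R j : ev0 (b0 :: P b0 a0 j) = (true, j%:R).
Proof.
have := ev0_P j; rewrite /ev0 /= => ->.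
by rewrite z0b /mulD /= add0r.
Qed.

Lemma ev0_P' a j : a != a0 -> ev0 (P b0 a j) = (false, 0).
Proof. by move=> H; rewrite /ev0 ev_P z0b subr0 /z0 (negbTE H) mulr0. Qed.

Lemma ev0_R' a j : a != a0 -> ev0 (b0 :: P b0 a j) = (true, 0).
Proof.
move=> H; have := ev0_P' j H; rewrite /ev0 /= => ->.
by rewrite z0b /mulD /= addr0.
Qed.

Lemma one_neq0 : (1 : 'Z_T) != 0.
Proof.
have := Zp_natE 1 hT; rewrite mulr1n => ->; rewrite dvdn1.
by case: (tlet ts a0) hT => [|[|]].
Qed.

End Rep2.

End MC.
Import MC.
Module MD.

Section Easy.
Variable n : nat.
Variable ts : seq nat.
Local Notation word := (seq 'I_n).
Local Notation E := (eqW ts).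

Definition ok (a : 'I_n) := fun c : 'I_n => (val c == 0) || (c == a).

Lemma inWi_E a (s s' : word) : inWi ts a s -> E s s' -> inWi ts a s'.
Proof. by case=> u [Hu Hs] H; exists u; split => //; apply: eqW_trans (eqW_sym H) Hs. Qed.

Definition Q (b a : 'I_n) j : word := flatten (nseq j [:: a; b]).

Lemma Q_add b a x y : Q b a (x + y) = Q b a x ++ Q b a y.
Proof. by rewrite /Q nseqD flatten_cat. Qed.

Lemma rev_P b a j : rev (P b a j) = Q b a j.
Proof.
elim: j => [|j IH] //.
rewrite P_S.
have -> : [:: b, a & P b a j] = [:: b; a] ++ P b a j by [].
rewrite rev_cat IH -addn1 Q_add.
by rewrite (_ : rev [:: b; a] = [:: a; b]).
Qed.

Lemma Pb (b a : 'I_n) j : P b a j ++ [:: b] = b :: Q b a j.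
Proof. by elim: j => [|j IH] //=; rewrite IH. Qed.

Lemma RR (b a : 'I_n) j : E ((b :: P b a j) ++ (b :: P b a j)) [::].
Proof.
have -> : (b :: P b a j) ++ (b :: P b a j) = b :: ((P b a j ++ [:: b]) ++ P b a j)
  by rewrite cat_cons -catA.
rewrite Pb -rev_P.
apply: eqW_trans (_ : E ([::] ++ rev (P b a j) ++ P b a j) _).
  by have := eqW_ctx [::] (rev (P b a j) ++ P b a j) (eqW_invol ts b).
exact: E_rev.
Qed.

Section Th.
Variables b a : 'I_n.
Hypothesis hb : val b = 0.
Hypothesis ha : 0 < val a.
Variable k : nat.
Local Notation th := (theta b a k).

Lemma ba_neq : (b == a) = false.
Proof. by apply/negbTE/eqP => H; move: ha; rewrite -H hb. Qed.

Lemma th_cat (s u : word) : th (s ++ u) = th s ++ th u.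
Proof. by rewrite /theta map_cat flatten_cat. Qed.

Lemma th_cons c (s : word) : th (c :: s) = (if c == a then b :: P b a k else [:: c]) ++ th s.
Proof. by []. Qed.

Lemma th_b (s : word) : th (b :: s) = b :: th s.
Proof. by rewrite th_cons ba_neq. Qed.

Lemma th_P j : E (th (P b a j)) (P b a (k * j)).
Proof.
elim: j => [|j IH]; first by rewrite muln0; apply: eqW_refl.
rewrite P_S th_b th_cons eqxx mulnS P_add.
apply: eqW_trans (_ : E (b :: b :: P b a k ++ P b a (k * j)) _).
  by do 2 apply: E_cons; apply: E_cat => //; apply: eqW_refl.
by have := eqW_ctx [::] (P b a k ++ P b a (k * j)) (eqW_invol ts b).
Qed.

Lemma th_hom (s u : word) : E s u -> E (th s) (th u).
Proof.
elim=> {s u}.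
- by move=> s; apply: eqW_refl.
- by move=> s u _ H; apply: eqW_sym.
- by move=> s u v _ H1 _ H2; apply: eqW_trans H1 H2.
- by move=> x y s u _ H; rewrite !th_cat; apply: E_cat; [apply: eqW_refl|apply: E_cat => //; apply: eqW_refl].
- move=> c; rewrite th_cons th_cons /= cats0.
  by case: eqP => _; [exact: RR | exact: eqW_invol].
- move=> b' a' hb' ha'.
  have -> : b' = b by apply: val_inj; rewrite /= hb' hb.
  case: (a' =P a) => [->|Hne].
    apply: eqW_trans (th_P _) _.
    exact: (P_mulT ts hb ha k).
  have -> : th (flatten (nseq (tlet ts a') [:: b; a'])) = flatten (nseq (tlet ts a') [:: b; a']).
    elim: (tlet ts a') => [|j IH] //=.
    by rewrite th_b th_cons (introF eqP Hne) /= IH.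
  exact: eqW_braid.
Qed.

Lemma th_ok a' (u : word) : all (ok a') u -> all (ok a') (th u).
Proof.
elim: u => [|c u IH] //= /andP[Hc Hu]; rewrite th_cons all_cat IH // andbT.
case: eqP => [Hca|]; last by rewrite /= Hc.
move: Hc; rewrite /ok Hca => /orP[/eqP H|/eqP <-]; first by move: ha; rewrite H.
rewrite /= hb eqxx /=.
by elim: k => [|j IH'] //=; rewrite IH' (hb : nat_of_ord b = 0) /= eqxx orbT.
Qed.

End Th.

Lemma th_inv (b a : 'I_n) k k' (u : word) : val b = 0 -> 0 < val a ->
  (k * k') %% tlet ts a = 1 ->
  E (theta b a k (theta b a k' u)) u.
Proof.
move=> hb ha Hk.
elim: u => [|c u IH]; first exact: eqW_refl.
rewrite [theta b a k' _]th_cons th_cat.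
have -> : c :: u = [:: c] ++ u by [].
apply: E_cat => //.
case: eqP => [->|Hne]; last by rewrite /theta /= (introF eqP Hne) cats0; apply: eqW_refl.
rewrite th_b //; apply: eqW_trans (_ : E (b :: P b a (k * k')) _).
  by apply: E_cons; apply: th_P.
apply: eqW_trans (_ : E (b :: P b a 1) _).
  by apply: E_cons; rewrite -Hk; apply: P_mod.
by have := eqW_ctx [::] [:: a] (eqW_invol ts b).
Qed.

Definition Inv (f : word -> word) :=
  (forall s u, E s u -> E (f s) (f u)) /\ forall a : 'I_n, 0 < val a -> stabilizes ts a f.

Lemma inC_Inv f : inC ts f -> Inv f.
Proof.
elim=> {f}.
- move=> f Hf; split.
    by move=> s u H; apply: eqW_trans (Hf s) _; apply: eqW_trans H (eqW_sym (Hf u)).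
  move=> a ha; split.
    by move=> s Hs; apply: inWi_E Hs (eqW_sym (Hf s)).
  by move=> s Hs; exists s.
- move=> b a k f hb ha /andP[Hk1 Hk2] Hcop Hf; split.
    by move=> s u H; apply: eqW_trans (Hf s) _; apply: eqW_trans (th_hom hb ha k H) (eqW_sym (Hf u)).
  have [k' Hk'] : exists k', (k * k') %% tlet ts a = 1.
    have k0 : 0 < k by [].
    have [[u1 u2] /= Hu] := coprimeP (tlet ts a) k0 Hcop.
    exists u1. have HT : 1 < tlet ts a by lia.
    have -> : k * u1 = 1 + u2 * tlet ts a by lia.
    by rewrite addnC modnMDl modn_small.
  move=> a' ha'; split.
    move=> s [u [Hu Hs]]; exists (theta b a k u); split; first exact: th_ok.
    by apply: eqW_trans (Hf s) _; apply: th_hom.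
  move=> s [u [Hu Hs]]; exists (theta b a k' u); split.
    by exists (theta b a k' u); split; [exact: th_ok | apply: eqW_refl].
  apply: eqW_trans (Hf _) _; apply: eqW_trans (th_inv u hb ha Hk') _.
  exact: eqW_sym.
- move=> f g h _ [Rf Sf] _ [Rg Sg] Hh; split.
    by move=> s u H; apply: eqW_trans (Hh s) _; apply: eqW_trans (Rf _ _ (Rg _ _ H)) (eqW_sym (Hh u)).
  move=> a ha; have [Sf1 Sf2] := Sf a ha; have [Sg1 Sg2] := Sg a ha; split.
    by move=> s Hs; apply: inWi_E (Sf1 _ (Sg1 _ Hs)) (eqW_sym (Hh s)).
  move=> s Hs; have [u [Hu Hfu]] := Sf2 s Hs; have [v [Hv Hgv]] := Sg2 u Hu.
  exists v; split => //; apply: eqW_trans (Hh v) _; apply: eqW_trans Hfu.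
  exact: Rf.
- move=> f g _ [Rf Sf] [Rg _] Hgf; split => // a ha.
  have [Sf1 Sf2] := Sf a ha; split.
    move=> s Hs; have [u [Hu Hfu]] := Sf2 s Hs.
    apply: inWi_E Hu _; apply: eqW_trans (eqW_sym (Hgf u)) _; exact: Rg.
  by move=> s Hs; exists (f s); split; [exact: Sf1 | exact: Hgf].
Qed.

End Easy.

End MD.
Import MD.
Module MF.
Import all_algebra ring.
Import GRing.Theory.
Local Open Scope ring_scope.

Section Hard.
Variable n : nat.
Variable ts : seq nat.
Local Notation word := (seq 'I_n).
Local Notation E := (eqW ts).
Variable b0 : 'I_n.
Hypothesis hb0 : val b0 = 0%N.
Hypothesis htl : forall a : 'I_n, (0 < val a)%N -> odd (tlet ts a) && (2 < tlet ts a)%N.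
Variables f g : word -> word.
Hypothesis Hf : is_hom ts f.
Hypothesis Hg : is_hom ts g.
Hypothesis Hgf : forall s, E (g (f s)) s.
Hypothesis S : forall a : 'I_n, (0 < val a)%N -> stabilizes ts a f.

Lemma T1 (a : 'I_n) : (0 < val a)%N -> (1 < tlet ts a)%N.
Proof. by move=> /htl /andP[_ H]; apply: ltnW. Qed.

Lemma f_resp (s u : word) : E s u -> E (f s) (f u).
Proof. by case: Hf => H _; apply: H. Qed.

Lemma f_app (s u : word) : E (f (s ++ u)) (f s ++ f u).
Proof. by case: Hf => _ H; apply: H. Qed.

Lemma f_nil_inj (w : word) : E (f w) [::] -> E w [::].
Proof.
move=> H; apply: eqW_trans (eqW_sym (Hgf w)) _.
apply: eqW_trans (hom_nil Hg).
by case: Hg => Hg1 _; apply: Hg1.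
Qed.

Lemma okb (a : 'I_n) : ok a b0.
Proof. by rewrite /ok hb0 eqxx. Qed.

Lemma inWi_letter (a c : 'I_n) : val c = 0%N \/ c = a -> inWi ts a [:: c].
Proof.
move=> H; exists [:: c]; split; last exact: eqW_refl.
by rewrite /= andbT /ok; case: H => ->; rewrite eqxx ?orbT.
Qed.

Lemma img_nf (a : 'I_n) (w : word) : (0 < val a)%N -> inWi ts a w ->
  (exists j, E (f w) (P b0 a j)) \/ (exists j, E (f w) (b0 :: P b0 a j)).
Proof.
move=> ha Hw; have [Hs _] := S ha.
have [u [Hu Hfu]] := Hs w Hw.
have [[j Hj]|[j Hj]] := nf hb0 ha (ltnW (T1 ha)) Hu.
  by left; exists j; apply: eqW_trans Hfu Hj.
by right; exists j; apply: eqW_trans Hfu Hj.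
Qed.

Lemma dvd_E (a : 'I_n) j : (0 < val a)%N -> ev0 ts a (P b0 a j) = ev0 ts a [::] ->
  E (P b0 a j) [::].
Proof.
move=> ha; rewrite ev0_P //.
move=> [] /eqP; rewrite Zp_natE; last exact: T1.
exact: P_dvd.
Qed.

Section TwoLetters.
Variables a1 a2 : 'I_n.
Hypothesis ha1 : (0 < val a1)%N.
Hypothesis ha2 : (0 < val a2)%N.
Hypothesis hne : a2 != a1.

Lemma fb : E (f [:: b0]) [:: b0].
Proof.
have hT := T1 ha1.
have Hb1 : inWi ts a1 [:: b0] by apply: inWi_letter; left.
have Hb2 : inWi ts a2 [:: b0] by apply: inWi_letter; left.
have e2 : ev0 ts a1 (f [:: b0]) = (false, 0) \/ ev0 ts a1 (f [:: b0]) = (true, 0).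
  have [[l Hl]|[l Hl]] := img_nf ha2 Hb2.
    by left; rewrite (ev0_E ha1 hT Hl) ev0_P'.
  by right; rewrite (ev0_E ha1 hT Hl) ev0_R'.
have [[j Hj]|[j Hj]] := img_nf ha1 Hb1.
  exfalso.
  have Hj' := ev0_E ha1 hT Hj; rewrite ev0_P // in Hj'.
  have Hjn : ev0 ts a1 (P b0 a1 j) = ev0 ts a1 [::].
    rewrite ev0_P //; case: e2 => e2; rewrite e2 in Hj'; [by rewrite -Hj'| by case: Hj'].
  have H0 : E (f [:: b0]) [::] by apply: eqW_trans Hj (dvd_E ha1 Hjn).
  have := ev0_E ha1 hT (f_nil_inj H0).
  by rewrite ev0_b.
have Hj' := ev0_E ha1 hT Hj; rewrite ev0_R // in Hj'.
have Hjn : ev0 ts a1 (P b0 a1 j) = ev0 ts a1 [::].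
  rewrite ev0_P //; case: e2 => e2; rewrite e2 in Hj'; [by case: Hj'| by case: Hj' => <-].
apply: eqW_trans Hj _; apply: E_cons; exact: dvd_E ha1 Hjn.
Qed.
End TwoLetters.

Section Letter.
Hypothesis Hfb : E (f [:: b0]) [:: b0].

Lemma f_cons c (s : word) : E (f (c :: s)) (f [:: c] ++ f s).
Proof. exact: hom_cons. Qed.

Lemma fP (a : 'I_n) k : E (f [:: a]) (b0 :: P b0 a k) ->
  forall m, E (f (P b0 a m)) (P b0 a (k * m)).
Proof.
move=> Hk; elim=> [|m IH]; first by rewrite muln0; exact: hom_nil Hf.
rewrite P_S mulnS P_add.
apply: eqW_trans (f_cons _ _) _.
apply: eqW_trans (_ : E ([:: b0] ++ ((b0 :: P b0 a k) ++ P b0 a (k * m))) _).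
  apply: E_cat => //; apply: eqW_trans (f_cons _ _) _; exact: E_cat.
by have := eqW_ctx [::] (P b0 a k ++ P b0 a (k * m)) (eqW_invol ts b0).
Qed.

Lemma fR (a : 'I_n) k : E (f [:: a]) (b0 :: P b0 a k) ->
  forall m, E (f (b0 :: P b0 a m)) (b0 :: P b0 a (k * m)).
Proof.
move=> Hk m; apply: eqW_trans (f_cons _ _) _.
by apply: (E_cat (s' := [:: b0])) => //; exact: fP.
Qed.

Lemma fa (a : 'I_n) : (0 < val a)%N -> exists k,
  [&& (0 < k)%N, (k < tlet ts a)%N & coprime k (tlet ts a)] /\ E (f [:: a]) (b0 :: P b0 a k).
Proof.
move=> ha; have hT := T1 ha.
have Ha : inWi ts a [:: a] by apply: inWi_letter; right.
have [[j Hj]|[j Hj]] := img_nf ha Ha.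
  exfalso.
  have H2 : E (P b0 a (j + j)) [::].
    rewrite P_add; apply: eqW_trans (_ : E (f [:: a] ++ f [:: a]) _).
      by apply: E_cat; apply: eqW_sym.
    apply: eqW_trans (eqW_sym (f_app _ _)) _.
    apply: eqW_trans (hom_nil Hf); apply: f_resp; exact: eqW_invol.
  have := ev0_E ha hT H2; rewrite ev0_P // => -[] /eqP; rewrite Zp_natE //.
  rewrite addnn -muln2 Gauss_dvdl; last by rewrite coprimen2; case/andP: (htl ha).
  move=> /(P_dvd (ts := ts) hb0 ha) Hj0.
  have := ev0_E ha hT (f_nil_inj (eqW_trans Hj Hj0)).
  by rewrite ev0_a.
set k := (j %% tlet ts a)%N.
have Hk : E (f [:: a]) (b0 :: P b0 a k).
  by apply: eqW_trans Hj _; apply: E_cons; apply: P_mod.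
exists k; split => //.
have [_ Hsur] := S ha.
have [u [[v [Hv Huv]] Hfu]] := Hsur _ Ha.
have Hfuv : E (f v) [:: a] by apply: eqW_trans (f_resp (eqW_sym Huv)) Hfu.
have [[j' Hj']|[j' Hj']] := nf hb0 ha (ltnW hT) Hv.
  exfalso.
  have := ev0_E ha hT (eqW_trans (eqW_sym Hfuv) (eqW_trans (f_resp Hj') (fP Hk j'))).
  by rewrite ev0_a ev0_P.
have := ev0_E ha hT (eqW_trans (eqW_sym Hfuv) (eqW_trans (f_resp Hj') (fR Hk j'))).
rewrite ev0_a ev0_R // => -[] /esym /(Zp_nat1 hT) Hm.
have k0 : (0 < k)%N.
  by rewrite lt0n; apply/eqP => k0; move: Hm; rewrite k0 mul0n mod0n.
rewrite k0 /= ltn_pmod ?(ltnW hT) //=.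
by apply: modn_coprime k0 _; exists j'.
Qed.

Lemma flat1 (s : word) : flatten [seq [:: c] | c <- s] = s.
Proof. by elim: s => //= c s ->. Qed.

Lemma th1 (b a d : 'I_n) k : theta b a k [:: d] = if d == a then b :: P b a k else [:: d].
Proof. by rewrite /theta /= cats0. Qed.

Lemma build (l : seq 'I_n) : uniq l -> all (fun c : 'I_n => 0 < val c)%N l ->
  exists F : word -> word, [/\ inC ts F,
    forall s, F s = flatten [seq F [:: c] | c <- s],
    F [:: b0] = [:: b0],
    forall c, c \notin l -> F [:: c] = [:: c] &
    forall c, c \in l -> E (f [:: c]) (F [:: c])].
Proof.
elim: l => [|c l IH] /=.
  move=> _ _; exists id; split => //.
  - by apply: inC_id => s; apply: eqW_refl.
  - by move=> s; rewrite flat1.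
move=> /andP[cl ul] /andP[hc al].
have [F [FC Fform Fb Fout Fin]] := IH ul al.
have [k [/and3P[k0 kT kcop] Hk]] := fa hc.
have Fcat x y : F (x ++ y) = F x ++ F y.
  by rewrite Fform map_cat flatten_cat -!Fform.
have Ffix (w : word) : all (fun d => F [:: d] == [:: d]) w -> F w = w.
  rewrite Fform; elim: w => //= d w IHw /andP[/eqP -> /IHw ->] //.
exists (fun s => F (theta b0 c k s)); split.
- apply: (inC_comp (f := F) (g := theta b0 c k)) => //; last by move=> s; apply: eqW_refl.
  apply: (inC_gen (b := b0) (a := c) (k := k)) => //; first by rewrite k0.
  by move=> s; apply: eqW_refl.
- move=> s; elim: s => [|d s IHs] /=; first by rewrite Fform.
  by rewrite th_cons th1 Fcat IHs.
- by rewrite th1 (ba_neq hb0 hc).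
- move=> d; rewrite in_cons negb_or => /andP[/negbTE dc dl].
  by rewrite th1 dc Fout.
- move=> d; rewrite in_cons => /orP[/eqP ->|dl].
    rewrite th1 eqxx Ffix //= Fb eqxx /=.
    clear Hk k0 kT kcop.
    by elim: k => //= j ->; rewrite Fb Fout // !eqxx.
  have dc : (d == c) = false by apply/negbTE; apply: contraNneq cl => <-.
  by rewrite th1 dc; apply: Fin.
Qed.

End Letter.
End Hard.

End MF.
Import MF.

Lemma tseq_mem (ms ks : seq nat) x : x \in tseq ms ks -> x \in ms.
Proof.
elim: ms ks => [|m ms IH] [|k ks] //=.
rewrite /tseq /= mem_cat => /orP[/nseqP[-> _]|H].
  by rewrite mem_head.
by rewrite in_cons (IH ks H) orbT.
Qed.

Lemma tseq_size (ms ks : seq nat) : size ms = size ks -> size (tseq ms ks) = sumn ks.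
Proof.
elim: ms ks => [|m ms IH] [|k ks] //= [] H.
by rewrite /tseq /= size_cat size_nseq -(IH _ H).
Qed.

Theorem lemma3p3 (n : nat) (ms ks : seq nat) :
  3 <= n ->
  size ms = size ks ->
  uniq ms ->
  all (fun m => odd m && (3 <= m)) ms ->
  all (fun k => 0 < k) ks ->
  sumn ks = n - 1 ->
  forall theta0 : seq 'I_n -> seq 'I_n,
    is_aut (tseq ms ks) theta0 ->
    (inC (tseq ms ks) theta0 <->
     forall a : 'I_n, 0 < val a -> stabilizes (tseq ms ks) a theta0).
Proof.
move=> hn hsz huq hms hks hsum th [Hf [g [Hg [Hgf Hfg]]]]; split.
  by move=> HC a ha; have [_ S] := inC_Inv HC; exact: S.
move=> S.
set ts := tseq ms ks.
have htl : forall a : 'I_n, 0 < val a -> odd (tlet ts a) && (2 < tlet ts a).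
  move=> a ha; rewrite /tlet.
  have Hlt : (val a).-1 < size ts.
    have ha' : 0 < nat_of_ord a := ha.
    rewrite /ts tseq_size // hsum; have := ltn_ord a; rewrite /=; lia.
  by have := allP hms _ (tseq_mem (mem_nth 0 Hlt)).
have n0 : 0 < n by lia.
have n1 : 1 < n by lia.
have n2 : 2 < n by lia.
pose b0 : 'I_n := Ordinal n0.
pose a1 : 'I_n := Ordinal n1.
pose a2 : 'I_n := Ordinal n2.
have hb0 : val b0 = 0 by [].
have Hfb := fb hb0 htl Hg Hgf S (a1 := a1) (a2 := a2) erefl erefl erefl.
have [F [FC Fform Fb _ Fin]] := build hb0 htl Hf Hg Hgf S Hfb
  (l := [seq c <- enum 'I_n | 0 < val c]) (filter_uniq _ (enum_uniq _)) (filter_all _ _).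
apply: (inC_comp (f := F) (g := id)) FC _ _.
  by apply: inC_id => s; apply: eqW_refl.
move=> s /=; elim: s => [|c s IH]; first by rewrite Fform; exact: hom_nil Hf.
rewrite Fform /= -Fform.
apply: eqW_trans (hom_cons c s Hf) _; apply: E_cat => //.
case: (posnP (val c)) => hc.
  have -> : c = b0 by apply: val_inj; rewrite /= hc.
  by rewrite Fb.
by apply: Fin; rewrite mem_filter hc mem_enum.
Qed.
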